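(* Let $\mathcal{G}\in\mathbf{G}$ be a periodic graph. For every $\lambda<0$ there exists a subspace $Y\subset H^1(\mathcal{G})$ with $\dim Y=3$ such that \[ \|w'\|_{L^2(\mathcal G)}^2+\lambda\|w\|_{L^2(\mathcal G)}^2\le\frac\lambda2\|w\|_{H^1(\mathcal{G})}^2\qquad\forall w\in Y. \]
   Context: $\mathbf{G}$: connected metric graphs with at most countably many edges, finite vertex degrees and $\inf_e|e|>0$. A periodic graph has infinitely many edges of uniformly bounded length arranged periodically (free cocompact $\mathbb Z^d$-action by isometries). $\|w\|_{H^1(\mathcal G)}^2=\|w'\|_{L^2}^2+\|w\|_{L^2}^2$. *)

(* Defs.v *)
From HB Require Import structures.
From mathcomp Require Import all_boot all_order all_algebra.
From mathcomp Require Import all_classical all_reals all_analysis.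
Set Implicit Arguments. Unset Strict Implicit. Unset Printing Implicit Defensive.
Import Order.TTheory GRing.Theory Num.Theory.
Import numFieldNormedType.Exports.
Local Open Scope classical_set_scope.
Local Open Scope ring_scope.

(* A (combinatorial skeleton of a) metric graph: countably many vertices and
   edges, each edge e identified with the interval [0, len e], its point 0 is
   glued to the vertex src e and its point len e to the vertex tgt e.
   (Edges of graphs in the class G considered here are all bounded, since a
   periodic graph has edges of uniformly bounded length.) *)
Record mgraph (R : realType) := MGraph {
  mE : countType;
  mV : countType;
  src : mE -> mV;
  tgt : mE -> mV;
  len : mE -> R }.

Section Graphs.
Variable R : realType.
Variable G : mgraph R.

Definition incident (e : mE G) (v : mV G) := src e = v \/ tgt e = v.
Definition adj (e : mE G) (v w : mV G) :=
  (src e = v /\ tgt e = w) \/ (src e = w /\ tgt e = v).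

Inductive reach (u : mV G) : mV G -> Prop :=
| reach_refl : reach u u
| reach_step v w e : reach u v -> adj e v w -> reach u w.

Definition in_classG :=
  (forall e : mE G, 0 < len e) /\
  (forall u v : mV G, reach u v) /\
  (forall v : mV G, exists s : seq (mE G), forall e : mE G, incident e v -> e \in s) /\
  (exists c : R, 0 < c /\ forall e : mE G, c <= len e).

(* periodic: infinitely many edges, uniformly bounded lengths, and a free
   cocompact action of Z^d by graph isometries (length-preserving graph
   automorphisms, possibly reversing the orientation of edges). *)
Definition periodic_graph :=
  in_classG /\
  ~ (exists s : seq (mE G), forall e : mE G, e \in s) /\
  (exists M : R, forall e : mE G, len e <= M) /\
  exists (d : nat) (aV : 'rV[int]_d -> mV G -> mV G)
                   (aE : 'rV[int]_d -> mE G -> mE G),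
    (forall v : mV G, aV 0 v = v) /\ (forall e : mE G, aE 0 e = e) /\
    (forall k l (v : mV G), aV (k + l) v = aV k (aV l v)) /\
    (forall k l (e : mE G), aE (k + l) e = aE k (aE l e)) /\
    (forall k (e : mE G), len (aE k e) = len e) /\
    (forall k (e : mE G), adj (aE k e) (aV k (src e)) (aV k (tgt e))) /\
    (forall k (v : mV G), aV k v = v -> k = 0) /\
    (forall k (e : mE G), aE k e = e -> k = 0) /\
    (exists s : seq (mE G), forall e : mE G, exists k e0, e0 \in s /\ e = aE k e0) /\
    (exists s : seq (mV G), forall v, exists k v0, v0 \in s /\ v = aV k v0).

Definition edge_H1 (l : R) (f g : R -> R) :=
  (@lebesgue_measure R).-integrable `[0%R, l] (EFin \o g) /\
  (\int[@lebesgue_measure R]_(x in `[0%R, l]) ((g x) ^+ 2)%:E < +oo)%E /\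
  (\int[@lebesgue_measure R]_(x in `[0%R, l]) ((f x) ^+ 2)%:E < +oo)%E /\
  forall x, 0 <= x <= l ->
    f x = f 0 + Rintegral (@lebesgue_measure R) `[0%R, x] g.

Definition endval (u : mE G -> R -> R) (e : mE G) (b : bool) :=
  if b then u e (len e) else u e 0.
Definition endvtx (e : mE G) (b : bool) := if b then tgt e else src e.

Definition L2sq (u : mE G -> R -> R) : \bar R :=
  (\esum_(e in [set: mE G])
     \int[@lebesgue_measure R]_(x in `[0%R, len e]) ((u e x) ^+ 2)%:E)%E.

(* u is in H^1(G) with derivative u' (edgewise, in the orientation of edges) *)
Definition inH1 (u u' : mE G -> R -> R) :=
  (forall e : mE G, edge_H1 (len e) (u e) (u' e)) /\
  (forall (e e' : mE G) b b', endvtx e b = endvtx e' b' -> endval u e b = endval u e' b') /\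
  (L2sq u < +oo)%E /\ (L2sq u' < +oo)%E.

Definition lincomb3 (a1 a2 a3 : R) (u1 u2 u3 : mE G -> R -> R) :=
  fun e x => a1 * u1 e x + a2 * u2 e x + a3 * u3 e x.

Definition linindep3 (u1 u2 u3 : mE G -> R -> R) :=
  forall a1 a2 a3 : R,
    (forall (e : mE G) x, 0 <= x <= len e -> lincomb3 a1 a2 a3 u1 u2 u3 e x = 0) ->
    a1 = 0 /\ a2 = 0 /\ a3 = 0.

End Graphs.

(* Main.v *)
Require Import Defs.
From HB Require Import structures.
From mathcomp Require Import all_boot all_order all_algebra.
From mathcomp Require Import all_classical all_reals all_analysis.
From mathcomp Require Import measurable_realfun.
From mathcomp Require Import zify ring lra.
Set Implicit Arguments. Unset Strict Implicit. Unset Printing Implicit Defensive.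
Import Order.TTheory GRing.Theory Num.Theory.
Local Open Scope classical_set_scope.
Local Open Scope ring_scope.
Section ES.
Local Open Scope ereal_scope.
Variable R : realType.

Lemma esum_finT (I : finType) (f : I -> \bar R) : (forall i, 0 <= f i) ->
  \esum_(i in [set: I]) f i = \sum_(i : I) f i.
Proof.
move=> f0; rewrite esum_fset; last by move=> *; exact: f0.
  rewrite (fsbigE (enum I)) ?enum_uniq //.
  - by rewrite big_enum_cond /=; apply: eq_bigl => i; rewrite in_setT.
  - by move=> i; rewrite mem_enum.
  exact: finite_finset.
Qed.

Lemma esum_sub (T : choiceType) (A B : set T) (f : T -> \bar R) :
  (forall t, 0 <= f t) -> A `<=` B -> \esum_(i in A) f i <= \esum_(i in B) f i.
Proof.
move=> f0 AB; rewrite (esum_mkcond A) (esum_mkcond B); apply: le_esum => t _.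
case: ifPn => tA; first by rewrite ifT // inE; apply: AB; rewrite -inE.
by case: ifP.
Qed.

Lemma esum_lowfin (T : choiceType) (I : finType) (f : T -> \bar R) (g : I -> T) :
  (forall t, 0 <= f t) -> injective g ->
  \sum_(i : I) f (g i) <= \esum_(t in [set: T]) f t.
Proof.
move=> f0 ig; rewrite -esum_finT //.
rewrite -(esum_image [set: I] g f); last by move=> x y _ _; exact: ig.
exact: esum_sub.
Qed.

Lemma esum_upfin (T : choiceType) (I : finType) (f : T -> \bar R) (g : I -> T) (r : T -> I) :
  (forall t, 0 <= f t) -> (forall t, f t != 0 -> g (r t) = t) ->
  \esum_(t in [set: T]) f t <= \sum_(i : I) f (g i).
Proof.
move=> f0 gr; set S := [set t | f t != 0].
have -> : \esum_(t in [set: T]) f t = \esum_(t in S) f t.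
  rewrite (esum_mkcond S); apply: eq_esum => t _.
  by case: ifPn => // /negP; rewrite in_setE /S /= => /negP; rewrite negbK => /eqP ->.
have eS : S = g @` (r @` S).
  apply/seteqP; split => [x Sx|_ [_ [u Su <-] <-]]; last by rewrite gr.
  by exists (r x); [exists x|rewrite gr].
have HS : forall t, S t -> g (r t) = t by move=> t St; apply: gr.
clearbody S.
rewrite eS esum_image; last first.
  by move=> _ _ /set_mem [x Sx <-] /set_mem [y Sy <-]; rewrite !HS // => ->.
rewrite -esum_finT //; exact: esum_sub.
Qed.
Lemma esum_bound (T : choiceType) (I : finType) (i0 : I) (f : T -> \bar R) (g : I -> T)
  (B : I -> R) :
  (forall t, 0 <= f t) -> (forall t, f t != 0 -> exists i, g i = t) ->
  (forall i, f (g i) <= (B i)%:E) ->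
  \esum_(t in [set: T]) f t <= (\sum_(i : I) B i)%:E.
Proof.
move=> f0 hs hB.
have [r hr] : {r : T -> I & forall t, f t != 0 -> g (r t) = t}.
  apply: (@choice _ _ (fun t i => f t != 0 -> g i = t)) => t.
  case: (boolP (f t != 0)) => ft; last by exists i0.
  by have [i gi] := hs t ft; exists i.
apply: le_trans (esum_upfin f0 hr) _.
rewrite -sumEFin; apply: lee_sum => i _; exact: hB.
Qed.
Lemma fine_le_E (x : \bar R) (y : R) : 0 <= x -> x <= y%:E -> (fine x <= y)%R.
Proof. by case: x => [r| |] //=; rewrite lee_fin. Qed.

Lemma fine_ge_E (x : \bar R) (y : R) : x < +oo -> y%:E <= x -> (y <= fine x)%R.
Proof. by case: x => [r| |] //=; rewrite ?lee_fin // leeNy_eq. Qed.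
End ES.

Section Edge.
Variable R : realType.
Local Notation mu := (@lebesgue_measure R).

Definition lin (a b l x : R) := a + (b - a) * x / l.

Lemma mu_itv (l : R) : 0 <= l -> mu `[0%R, l] = l%:E.
Proof.
move=> l0; rewrite lebesgue_measure_itv /=; case: ifPn => [_|].
  by rewrite sube0.
by rewrite -leNgt lee_fin => hl; congr EFin; apply/eqP; rewrite eq_le hl l0.
Qed.

Lemma int_cst (l c : R) : 0 <= l ->
  (\int[mu]_(x in `[0%R, l]) c%:E = (c * l)%:E)%E.
Proof.
move=> l0; rewrite (integral_cst mu (measurable_itv _)) EFinM; congr (_ * _)%E; exact: mu_itv.
Qed.

Lemma meas_lin (a b l : R) (D : set R) : measurable_fun D (fun x => lin a b l x ^+ 2).
Proof.
apply: measurable_funX; apply: measurable_funD; first exact: measurable_cst.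
rewrite /=. apply: measurable_funM; last exact: measurable_cst.
apply: measurable_funM; first exact: measurable_cst.
exact: measurable_id.
Qed.

Lemma lin_sq_le (a b l x : R) : 0 < l -> 0 <= x <= l -> lin a b l x ^+ 2 <= a ^+ 2 + b ^+ 2.
Proof.
move=> l0 /andP[x0 xl]; rewrite /lin -mulrA.
set t := x / l.
have t0 : 0 <= t by rewrite /t divr_ge0 // ltW.
have t1 : t <= 1 by rewrite /t ler_pdivrMr // mul1r.
have h1 : 0 <= t * (1 - t) * (a - b) ^+ 2.
  by rewrite mulr_ge0 ?sqr_ge0 // mulr_ge0 // subr_ge0.
have h2 : 0 <= t * a ^+ 2 by rewrite mulr_ge0 ?sqr_ge0.
have h3 : 0 <= (1 - t) * b ^+ 2 by rewrite mulr_ge0 ?sqr_ge0 ?subr_ge0.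
nra.
Qed.

Lemma int_lin_le (a b l : R) : 0 < l ->
  (\int[mu]_(x in `[0%R, l]) ((lin a b l x) ^+ 2)%:E <= ((a ^+ 2 + b ^+ 2) * l)%:E)%E.
Proof.
move=> l0; rewrite -int_cst; last exact: ltW.
apply: ge0_le_integral => //.
- by move=> x _; rewrite lee_fin sqr_ge0.
- by apply/measurable_EFinP; exact: meas_lin.
- move=> x /=; rewrite in_itv /= => hx; rewrite lee_fin.
  exact: lin_sq_le.
Qed.

Lemma int_lin_ge0 (a b l : R) :
  (0 <= \int[mu]_(x in `[0%R, l]) ((lin a b l x) ^+ 2)%:E)%E.
Proof. by apply: integral_ge0 => x _; rewrite lee_fin sqr_ge0. Qed.

Lemma int_lin_flat (a l : R) : 0 <= l ->
  (\int[mu]_(x in `[0%R, l]) ((lin a a l x) ^+ 2)%:E = (a ^+ 2 * l)%:E)%E.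
Proof.
move=> l0; rewrite -int_cst //; apply: eq_integral => x _.
by rewrite /lin subrr !mul0r addr0.
Qed.

Lemma edge_lin (a b l : R) : 0 < l -> edge_H1 l (lin a b l) (fun _ => (b - a) / l).
Proof.
move=> l0; split; [|split; [|split]].
- apply/integrableP; split; first exact/measurable_EFinP/measurable_cst.
  rewrite (eq_integral (fun _ => (`|(b - a) / l|)%:E)); last first.
    by [].
  by rewrite int_cst ?(ltW l0) // ltry.
- by rewrite int_cst ?(ltW l0) // ltry.
- by apply: le_lt_trans (int_lin_le a b l0) _; rewrite ltry.
- move=> x /andP[x0 xl].
  rewrite Rintegral_cst; last exact: measurable_itv.
  rewrite (_ : fine (mu `[0%R, x]) = x); last by rewrite mu_itv.
  by rewrite /lin mulr0 mul0r addr0 mulrAC.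
Qed.

End Edge.

Definition nrm d (z : 'rV[int]_d) : nat := (\max_(i < d) `|z ord0 i|)%N.

Section Lat.
Variable d : nat.
Local Notation Z := 'rV[int]_d.


Lemma nrm_coord (z : Z) i : (`|z ord0 i| <= nrm z)%N.
Proof. exact: (@leq_bigmax _ (fun i => `|z ord0 i|%N)). Qed.

Lemma nrm_le (z : Z) n : (forall i, `|z ord0 i| <= n)%N -> (nrm z <= n)%N.
Proof. by move=> h; apply/bigmax_leqP => i _; apply: h. Qed.

Lemma nrmD (x y : Z) : (nrm (x + y) <= nrm x + nrm y)%N.
Proof.
apply: nrm_le => i; rewrite mxE.
have := leqD_dist (x ord0 i) 0 (- y ord0 i).
rewrite opprK subr0 add0r ?opprK ?abszN => h.
by apply: leq_trans h _; apply: leq_add; apply: nrm_coord.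
Qed.

Lemma nrmN (x : Z) : nrm (- x) = nrm x.
Proof. by apply: eq_bigr => i _; rewrite mxE abszN. Qed.

Lemma nrmB (x y : Z) : nrm (x - y) = nrm (y - x).
Proof. by rewrite -nrmN opprB. Qed.

Lemma nrm0 : nrm (0 : Z) = 0%N.
Proof. by apply/eqP; rewrite -leqn0; apply: nrm_le => i; rewrite mxE. Qed.

Lemma nrm_tri (x y z : Z) : (nrm (x - z) <= nrm (x - y) + nrm (y - z))%N.
Proof. by rewrite -[x - z](subrKA y); apply: nrmD. Qed.

Definition boxT (n : nat) := {ffun 'I_d -> 'I_(n.*2.+1)}.
Definition bx n (f : boxT n) : Z := \row_i ((f i : nat)%:Z - n%:Z).

Lemma bx_inj n : injective (@bx n).
Proof.
move=> f g /rowP h; apply/ffunP => i; have := h i; rewrite !mxE.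
by move/addIr => [] /val_inj.
Qed.

Lemma bx_nrm n (f : boxT n) : (nrm (bx f) <= n)%N.
Proof.
apply: nrm_le => i; rewrite mxE; have := ltn_ord (f i).
move: (f i : nat) => m hm.
case: (leqP m n) => hmn; [rewrite distnEr // | rewrite distnEl ?(ltnW hmn) //]; lia.
Qed.

Lemma bx_surj n (z : Z) : (nrm z <= n)%N -> exists f : boxT n, bx f = z.
Proof.
move=> hz; exists [ffun i => inord (absz (z ord0 i + n%:Z))].
apply/rowP => i; rewrite !mxE ffunE.
have ha := nrm_coord z i; move: (z ord0 i) ha => a ha.
have : (`|a|%N%:Z <= n%:Z)%R by rewrite lez_nat (leq_trans ha hz).
rewrite abszE ler_norml => /andP[h1 h2].
have e : ((absz (a + n%:Z))%:Z = a + n%:Z)%R by rewrite gez0_abs //; lia.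
have hl : (absz (a + n%:Z)%R < n.*2.+1)%N.
  have : ((absz (a + n%:Z))%:Z <= (n.*2)%:Z)%R by rewrite e; lia.
  rewrite lez_nat; lia.
rewrite inordK // e; lia.
Qed.

Lemma card_boxT n : #|{: boxT n}| = (n.*2.+1 ^ d)%N.
Proof. by rewrite card_ffun !card_ord. Qed.

End Lat.

Lemma fin_bound (T : eqType) (s : seq T) (P : T -> nat -> Prop) :
  (forall x B B', (B <= B')%N -> P x B -> P x B') ->
  (forall x, x \in s -> exists B, P x B) -> exists B, forall x, x \in s -> P x B.
Proof.
move=> mono; elim: s => [|y s IH] h; first by exists 0%N.
have [B1 HB1] := h y (mem_head _ _).
have [B2 HB2] : exists B, forall x, x \in s -> P x B.
  by apply: IH => x xs; apply: h; rewrite in_cons xs orbT.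
exists (maxn B1 B2) => x; rewrite in_cons => /orP[/eqP ->|xs].
  by apply: mono HB1; apply: leq_maxl.
by apply: mono (HB2 x xs); apply: leq_maxr.
Qed.

Section Graph.
Variables (R : realType) (G : mgraph R) (d : nat).
Local Notation Z := 'rV[int]_d.
Variables (aV : Z -> mV G -> mV G) (aE : Z -> mE G -> mE G).
Hypothesis aV0 : forall v, aV 0 v = v.
Hypothesis aE0 : forall e, aE 0 e = e.
Hypothesis aVD : forall k l v, aV (k + l) v = aV k (aV l v).
Hypothesis aED : forall k l e, aE (k + l) e = aE k (aE l e).
Hypothesis aEadj : forall k e, adj (aE k e) (aV k (src e)) (aV k (tgt e)).
Hypothesis aVfree : forall k v, aV k v = v -> k = 0.
Hypothesis aEfree : forall k e, aE k e = e -> k = 0.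
Variables (sE : seq (mE G)) (sV : seq (mV G)).
Variables (kap : mV G -> Z) (rho : mV G -> mV G).
Hypothesis Hkr : forall v, rho v \in sV /\ v = aV (kap v) (rho v).

Lemma aV_inv k v : aV (- k) (aV k v) = v.
Proof. by rewrite -aVD addNr aV0. Qed.

Lemma aV_uniq k k' p : aV k p = aV k' p -> k = k'.
Proof.
move=> h; have : aV (- k' + k) p = p by rewrite aVD h aV_inv.
by move/aVfree; rewrite addrC => /eqP; rewrite subr_eq0 => /eqP.
Qed.

Lemma aE_uniq k k' p : aE k p = aE k' p -> k = k'.
Proof.
move=> h; have : aE (- k' + k) p = p by rewrite aED h -aED addNr aE0.
by move/aEfree; rewrite addrC => /eqP; rewrite subr_eq0 => /eqP.
Qed.

Lemma pair_bound : exists B, forall p, p \in sV -> forall q, q \in sV ->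
  forall δ, aV δ p = q -> (nrm δ <= B)%N.
Proof.
apply: fin_bound => [p B B' hB h q qs δ e|p ps].
  exact: leq_trans (h q qs δ e) hB.
apply: fin_bound => [q B B' hB h δ e|q qs].
  exact: leq_trans (h δ e) hB.
case: (pselect (exists δ, aV δ p = q)) => [[δ0 h0]|hn].
  by exists (nrm δ0) => δ e; rewrite (aV_uniq (etrans e (esym h0))).
by exists 0%N => δ e; exfalso; apply: hn; exists δ.
Qed.

Lemma kap_shift B : (forall p, p \in sV -> forall q, q \in sV ->
  forall δ, aV δ p = q -> (nrm δ <= B)%N) ->
  forall w k, exists δ, kap (aV k w) - k = kap w - δ /\ (nrm δ <= B)%N.
Proof.
move=> HB w k.
have [hw ew] := Hkr w; have [hw' ew'] := Hkr (aV k w).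
exists (- kap (aV k w) + (k + kap w)); split.
  by rewrite opprD opprK opprD addrCA [kap w + _]addrCA subrr addr0.
apply: (HB _ hw _ hw').
rewrite aVD aVD -ew.
move: ew'; set x := aV k w; set k' := kap x; set r' := rho x.
by move=> ew'; rewrite {1}ew' aV_inv.
Qed.

Lemma endv_aE k e b : exists b', endvtx (aE k e) b = aV k (endvtx e b').
Proof.
case: (aEadj k e) => [[hs ht]|[hs ht]]; case: b => /=.
- by exists true.
- by exists false.
- by exists false.
- by exists true.
Qed.

Lemma Rb_exists : exists Rb, forall e0, e0 \in sE -> forall k b,
  (nrm (kap (endvtx (aE k e0) b) - k) <= Rb)%N.
Proof.
have [B HB] := pair_bound.
apply: fin_bound => [e0 r r' hr h k b|e0 _].
  exact: leq_trans (h k b) hr.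
exists (nrm (kap (src e0)) + nrm (kap (tgt e0)) + B)%N => k b.
have [b' ->] := endv_aE k e0 b.
have [δ [-> hδ]] := kap_shift HB (endvtx e0 b') k.
apply: leq_trans (nrmD _ _) _; rewrite nrmN.
by case: b' => /=; lia.
Qed.

Variables (kapE : mE G -> Z) (eE : mE G -> mE G).
Hypothesis HkE : forall e, eE e \in sE /\ e = aE (kapE e) (eE e).
Variable Rb : nat.
Hypothesis HRb : forall e0, e0 \in sE -> forall k b,
  (nrm (kap (endvtx (aE k e0) b) - k) <= Rb)%N.

Lemma endv_near e b : (nrm (kap (endvtx e b) - kapE e) <= Rb)%N.
Proof. by have [h1 h2] := HkE e; have := HRb h1 (kapE e) b; rewrite -h2. Qed.

Lemma endv_diff e : (nrm (kap (src e) - kap (tgt e)) <= Rb.*2)%N.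
Proof.
apply: leq_trans (nrm_tri _ (kapE e) _) _; rewrite [X in (_ + X)%N]nrmB.
have := endv_near e false; have := endv_near e true => /=; lia.
Qed.

Variables (N : nat) (i0 : 'I_d) (e00 : mE G).

Definition psi (n : nat) : nat := minn N (N.*2 - n).
Definition tt (j : nat) : Z := \row_i (if i == i0 then (j * (3 * N))%:Z else 0).
Definition h (j : nat) (v : mV G) : R := (psi (nrm (kap v - tt j)))%:R.

Lemma psi_lip (x y t : Z) : (psi (nrm (x - t)) <= psi (nrm (y - t)) + nrm (x - y))%N.
Proof.
have := nrm_tri y x t; rewrite [nrm (y - x)]nrmB /psi; lia.
Qed.

Lemma sq_lip (x y D : nat) : (x <= y + D)%N -> (y <= x + D)%N ->
  ((x%:R - y%:R) ^+ 2 <= (D%:R) ^+ 2 :> R).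
Proof.
rewrite -!(ler_nat R) !natrD => h1 h2.
have hD : (0 : R) <= D%:R by [].
nra.
Qed.

Lemma h_diff j e : (h j (src e) - h j (tgt e)) ^+ 2 <= ((Rb.*2)%:R) ^+ 2.
Proof.
have h1 := psi_lip (kap (src e)) (kap (tgt e)) (tt j).
have h2 := psi_lip (kap (tgt e)) (kap (src e)) (tt j).
rewrite [nrm (kap (tgt e) - kap (src e))]nrmB in h2.
rewrite /h; apply: le_trans (sq_lip h1 h2) _.
by rewrite lerXn2r ?nnegrE ?ler_nat //; exact: endv_diff.
Qed.

Hypothesis hRN : (Rb <= N)%N.

Lemma tt_sep j j' : (j < 3)%N -> (j' < 3)%N -> j != j' ->
  (3 * N <= nrm (tt j - tt j'))%N.
Proof.
move=> hj hj' hne; apply: leq_trans _ (nrm_coord _ i0); rewrite !mxE eqxx.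
case: (leqP (j * (3 * N)) (j' * (3 * N))) => hle;
  [rewrite distnEr // | rewrite distnEl ?(ltnW hle) //];
  move: hj hj' hne hle; case: j => [|[|[|j]]] //; case: j' => [|[|[|j']]] //; lia.
Qed.

Lemma flat_near j k e0 b : e0 \in sE -> (nrm (k - tt j) <= N - Rb)%N ->
  (nrm (kap (endvtx (aE k e0) b) - tt j) <= N)%N.
Proof.
move=> he hk; apply: leq_trans (nrm_tri _ k _) _.
have h1 := HRb he k b; apply: leq_trans (leq_add h1 hk) _; lia.
Qed.

Lemma flat j k e0 b : e0 \in sE -> (nrm (k - tt j) <= N - Rb)%N ->
  h j (endvtx (aE k e0) b) = N%:R.
Proof.
move=> he hk; have := flat_near b he hk; rewrite /h /psi => hn.
congr (_%:R); lia.
Qed.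

Lemma flat0 j j' k e0 b : (j < 3)%N -> (j' < 3)%N -> j != j' ->
  e0 \in sE -> (nrm (k - tt j) <= N - Rb)%N ->
  h j' (endvtx (aE k e0) b) = 0.
Proof.
move=> hj hj' hne he hk; have h3 := flat_near b he hk.
have h2 := tt_sep hj hj' hne.
move: h3; set x := kap (endvtx (aE k e0) b) => h3.
have h1 := nrm_tri (tt j) x (tt j').
rewrite [nrm (tt j - x)]nrmB in h1.
rewrite /h /psi -/x; apply/eqP; rewrite pnatr_eq0; apply/eqP.
move: h1 h2 h3; set a1 := nrm (x - tt j); set a2 := nrm (x - tt j'); set a3 := nrm (tt j - tt j').
lia.
Qed.

Lemma act j x : h j x != 0 -> (nrm (kap x - tt j) < N.*2)%N.
Proof. rewrite /h pnatr_eq0 /psi; lia. Qed.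

Lemma act_edge j e b : h j (endvtx e b) != 0 ->
  (nrm (kapE e - tt j) <= N.*2 + Rb)%N.
Proof.
move=> /act h1; apply: leq_trans (nrm_tri _ (kap (endvtx e b)) _) _.
rewrite nrmB; have := endv_near e b; lia.
Qed.

Definition Idx := ('I_3 * boxT d (N.*2 + Rb) * 'I_(size sE))%type.
Definition gI (x : Idx) : mE G := aE (tt x.1.1 + bx x.1.2) (nth e00 sE x.2).

Lemma act_idx j e b : (j < 3)%N -> h j (endvtx e b) != 0 -> exists x : Idx, gI x = e.
Proof.
move=> hj /act_edge /bx_surj [f hf].
have [h1 h2] := HkE e.
have hi : (index (eE e) sE < size sE)%N by rewrite index_mem.
exists (Ordinal hj, f, Ordinal hi); rewrite /gI /= hf addrC subrK nth_index //; rewrite -h2.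
Qed.

Hypothesis lenpos : forall e : mE G, 0 < len e.
Variable c : R.
Hypothesis c0 : 0 < c.
Hypothesis lenc : forall e : mE G, c <= len e.
Hypothesis N0 : (0 < N)%N.
Hypothesis e00E : e00 \in sE.

Definition ip (H : mV G -> R) : mE G -> R -> R :=
  fun e x => lin (H (src e)) (H (tgt e)) (len e) x.
Definition dp (H : mV G -> R) : mE G -> R -> R :=
  fun e x => (H (tgt e) - H (src e)) / len e.

Lemma ip_endval H e b : endval (ip H) e b = H (endvtx e b).
Proof.
case: b; rewrite /endval /ip /lin /=.
  by rewrite mulfK ?gt_eqF // addrC subrK.
by rewrite mulr0 mul0r addr0.
Qed.

Lemma inH1_ip H : (L2sq (ip H) < +oo)%E -> (L2sq (dp H) < +oo)%E -> inH1 (ip H) (dp H).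
Proof.
move=> h1 h2; split; [|split; [|split]] => //.
- by move=> e; apply: edge_lin.
- by move=> e e' b b'; rewrite !ip_endval => ->.
Qed.

Definition Ha (a1 a2 a3 : R) (v : mV G) : R := a1 * h 0 v + a2 * h 1 v + a3 * h 2 v.

Lemma Ha_supp a1 a2 a3 e : (Ha a1 a2 a3 (src e) != 0) || (Ha a1 a2 a3 (tgt e) != 0) ->
  exists x : Idx, gI x = e.
Proof.
have key : forall b, Ha a1 a2 a3 (endvtx e b) != 0 -> exists x : Idx, gI x = e.
  move=> b; rewrite /Ha.
  case: (eqVneq (h 0 (endvtx e b)) 0) => [z0|nz]; last by move=> _; exact: (@act_idx 0 e b isT nz).
  case: (eqVneq (h 1 (endvtx e b)) 0) => [z1|nz]; last by move=> _; exact: (@act_idx 1 e b isT nz).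
  case: (eqVneq (h 2 (endvtx e b)) 0) => [z2|nz]; last by move=> _; exact: (@act_idx 2 e b isT nz).
  by rewrite z0 z1 z2 !mulr0 !addr0 eqxx.
by case/orP => [/(key false)|/(key true)].
Qed.

Lemma e00_idx : (index e00 sE < size sE)%N.
Proof. by rewrite index_mem. Qed.

Definition x0I : Idx := (ord0, [ffun => ord0], Ordinal e00_idx).

Lemma L2_ip_bound a1 a2 a3 :
  (L2sq (ip (Ha a1 a2 a3)) <= (\sum_(x : Idx)
     ((Ha a1 a2 a3 (src (gI x))) ^+ 2 + (Ha a1 a2 a3 (tgt (gI x))) ^+ 2) * len (gI x))%:E)%E.
Proof.
apply: (esum_bound x0I).
- by move=> e; apply: int_lin_ge0.
- move=> e hne; apply: (Ha_supp (a1:=a1) (a2:=a2) (a3:=a3)); apply: contraNT hne; rewrite negb_or !negbK.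
  case/andP => /eqP hs /eqP ht.
  by rewrite /ip hs ht int_lin_flat ?(ltW (lenpos e)) // expr0n /= mul0r.
- by move=> x; apply: int_lin_le.
Qed.

Lemma L2_dp_eq H e :
  (\int[@lebesgue_measure R]_(x in `[0%R, len e]) ((dp H e x) ^+ 2)%:E =
   (((H (tgt e) - H (src e)) / len e) ^+ 2 * len e)%:E)%E.
Proof. by rewrite /dp int_cst // ltW. Qed.

Lemma L2_dp_bound a1 a2 a3 :
  (L2sq (dp (Ha a1 a2 a3)) <= (\sum_(x : Idx)
     ((Ha a1 a2 a3 (tgt (gI x)) - Ha a1 a2 a3 (src (gI x))) / len (gI x)) ^+ 2
       * len (gI x))%:E)%E.
Proof.
apply: (esum_bound x0I).
- by move=> e; rewrite L2_dp_eq lee_fin mulr_ge0 ?sqr_ge0 // ltW.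
- move=> e hne; apply: (Ha_supp (a1:=a1) (a2:=a2) (a3:=a3)); apply: contraNT hne; rewrite negb_or !negbK.
  case/andP => /eqP hs /eqP ht.
  by rewrite L2_dp_eq hs ht subrr mul0r expr0n /= mul0r.
- by move=> x; rewrite L2_dp_eq.
Qed.

Lemma L2_ip_fin a1 a2 a3 : (L2sq (ip (Ha a1 a2 a3)) < +oo)%E.
Proof. by apply: le_lt_trans (L2_ip_bound a1 a2 a3) _; rewrite ltry. Qed.

Lemma L2_dp_fin a1 a2 a3 : (L2sq (dp (Ha a1 a2 a3)) < +oo)%E.
Proof. by apply: le_lt_trans (L2_dp_bound a1 a2 a3) _; rewrite ltry. Qed.

Lemma dp_term a1 a2 a3 e :
  ((Ha a1 a2 a3 (tgt e) - Ha a1 a2 a3 (src e)) / len e) ^+ 2 * len e <=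
  3 * (a1 ^+ 2 + a2 ^+ 2 + a3 ^+ 2) * (Rb.*2)%:R ^+ 2 / c.
Proof.
have l0 := lenpos e; have lc := lenc e.
set B := (Rb.*2)%:R ^+ 2 : R.
have hB : 0 <= B by rewrite /B sqr_ge0.
have hD : forall j, (h j (tgt e) - h j (src e)) ^+ 2 <= B.
  by move=> j; rewrite -sqrrN opprB; apply: h_diff.
have -> : Ha a1 a2 a3 (tgt e) - Ha a1 a2 a3 (src e) =
  a1 * (h 0 (tgt e) - h 0 (src e)) + a2 * (h 1 (tgt e) - h 1 (src e))
  + a3 * (h 2 (tgt e) - h 2 (src e)) by rewrite /Ha; ring.
move: (hD 0%N) (hD 1%N) (hD 2%N).
set D0 := h 0 _ - _; set D1 := h 1 _ - _; set D2 := h 2 _ - _ => h0 h1 h2.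
have -> : ((a1 * D0 + a2 * D1 + a3 * D2) / len e) ^+ 2 * len e =
   (a1 * D0 + a2 * D1 + a3 * D2) ^+ 2 / len e.
  by field; rewrite gt_eqF.
set X := a1 * D0 + a2 * D1 + a3 * D2.
have hX : X ^+ 2 <= 3 * (a1 ^+ 2 + a2 ^+ 2 + a3 ^+ 2) * B.
  have e1 : (a1 * D0) ^+ 2 <= a1 ^+ 2 * B by rewrite exprMn ler_wpM2l ?sqr_ge0.
  have e2 : (a2 * D1) ^+ 2 <= a2 ^+ 2 * B by rewrite exprMn ler_wpM2l ?sqr_ge0.
  have e3 : (a3 * D2) ^+ 2 <= a3 ^+ 2 * B by rewrite exprMn ler_wpM2l ?sqr_ge0.
  have f1 : 0 <= (a1 * D0 - a2 * D1) ^+ 2 by rewrite sqr_ge0.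
  have f2 : 0 <= (a2 * D1 - a3 * D2) ^+ 2 by rewrite sqr_ge0.
  have f3 : 0 <= (a1 * D0 - a3 * D2) ^+ 2 by rewrite sqr_ge0.
  rewrite /X; nra.
set Y := 3 * _ * B in hX *.
have hY : 0 <= Y by apply: le_trans hX; rewrite sqr_ge0.
rewrite ler_pdivrMr // mulrAC ler_pdivlMr //.
have hX0 : 0 <= X ^+ 2 by rewrite sqr_ge0.
nra.
Qed.

Lemma card_Idx : #|{: Idx}| = (3 * ((N.*2 + Rb).*2.+1 ^ d) * size sE)%N.
Proof. by rewrite !card_prod card_boxT !card_ord. Qed.

Lemma D_bound a1 a2 a3 :
  fine (L2sq (dp (Ha a1 a2 a3))) <=
  #|{: Idx}|%:R * (3 * (a1 ^+ 2 + a2 ^+ 2 + a3 ^+ 2) * (Rb.*2)%:R ^+ 2 / c).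
Proof.
apply: fine_le_E; first by apply: esum_ge0 => e _; apply: integral_ge0 => x _; rewrite lee_fin sqr_ge0.
apply: le_trans (L2_dp_bound a1 a2 a3) _; rewrite lee_fin.
rewrite mulr_natl -sumr_const; apply: ler_sum => x _; exact: dp_term.
Qed.

Lemma Ha_flat j k b a1 a2 a3 : (j < 3)%N -> (nrm (k - tt j) <= N - Rb)%N ->
  Ha a1 a2 a3 (endvtx (aE k e00) b) = nth 0 [:: a1; a2; a3] j * N%:R.
Proof.
move=> hj hk; rewrite /Ha.
case: j hj hk => [|[|[|j]]] // _ hk /=.
- by rewrite (@flat _ k e00 b e00E hk) (@flat0 0 1 _ _ _ isT isT isT e00E hk)
    (@flat0 0 2 _ _ _ isT isT isT e00E hk) !mulr0 !addr0.
- by rewrite (@flat _ k e00 b e00E hk) (@flat0 1 0 _ _ _ isT isT isT e00E hk)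
    (@flat0 1 2 _ _ _ isT isT isT e00E hk) !mulr0 add0r addr0.
- by rewrite (@flat _ k e00 b e00E hk) (@flat0 2 0 _ _ _ isT isT isT e00E hk)
    (@flat0 2 1 _ _ _ isT isT isT e00E hk) !mulr0 !add0r.
Qed.

Lemma M_bound j a1 a2 a3 : (j < 3)%N ->
  #|{: boxT d (N - Rb)}|%:R * (c * (nth 0 [:: a1; a2; a3] j * N%:R) ^+ 2)
    <= fine (L2sq (ip (Ha a1 a2 a3))).
Proof.
move=> hj; apply: fine_ge_E; first exact: L2_ip_fin.
set gF := fun f : boxT d (N - Rb) => aE (tt j + bx f) e00.
have ginj : injective gF.
  move=> f f' /aE_uniq /addrI; exact: bx_inj.
apply: le_trans (esum_lowfin _ ginj); last first.
  by move=> e; apply: int_lin_ge0.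
rewrite mulr_natl -sumr_const -sumEFin; apply: lee_sum => f _.
have hk : (nrm ((tt j + bx f) - tt j) <= N - Rb)%N.
  by rewrite addrC addKr; apply: bx_nrm.
rewrite /gF /ip.
have -> := @Ha_flat j _ false a1 a2 a3 hj hk.
have -> := @Ha_flat j _ true a1 a2 a3 hj hk.
rewrite int_lin_flat; last exact: ltW.
by rewrite lee_fin mulrC ler_wpM2l ?sqr_ge0.
Qed.

Lemma indep a1 a2 a3 :
  (forall e x, 0 <= x <= len e -> ip (Ha a1 a2 a3) e x = 0) ->
  a1 = 0 /\ a2 = 0 /\ a3 = 0.
Proof.
move=> hz.
have key : forall j, (j < 3)%N -> nth 0 [:: a1; a2; a3] j = 0.
  move=> j hj.
  have hk : (nrm (tt j - tt j) <= N - Rb)%N by rewrite subrr nrm0.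
  have := hz (aE (tt j) e00) 0; rewrite lexx ltW ?lenpos // => /(_ isT).
  rewrite /ip /lin mulr0 mul0r addr0.
  have -> := @Ha_flat j _ false a1 a2 a3 hj hk.
  by move/eqP; rewrite mulf_eq0 pnatr_eq0 => /orP[/eqP //|/eqP hN]; move: N0; rewrite hN.
by split; [exact: (key 0%N)|split; [exact: (key 1%N)|exact: (key 2%N)]].
Qed.

Lemma lincomb_ip a1 a2 a3 :
  lincomb3 a1 a2 a3 (ip (h 0)) (ip (h 1)) (ip (h 2)) = ip (Ha a1 a2 a3).
Proof.
apply/funext => e; apply/funext => x; rewrite /lincomb3 /ip /lin /Ha; ring.
Qed.

Lemma lincomb_dp a1 a2 a3 :
  lincomb3 a1 a2 a3 (dp (h 0)) (dp (h 1)) (dp (h 2)) = dp (Ha a1 a2 a3).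
Proof.
apply/funext => e; apply/funext => x; rewrite /lincomb3 /dp /Ha; ring.
Qed.

Lemma h_Ha0 : h 0 = Ha 1 0 0.
Proof. by apply/funext => v; rewrite /Ha mul1r !mul0r !addr0. Qed.
Lemma h_Ha1 : h 1 = Ha 0 1 0.
Proof. by apply/funext => v; rewrite /Ha mul1r !mul0r add0r addr0. Qed.
Lemma h_Ha2 : h 2 = Ha 0 0 1.
Proof. by apply/funext => v; rewrite /Ha mul1r !mul0r !add0r. Qed.

Lemma main_sec (lam : R) : lam < 0 ->
  (1 - lam / 2) * (#|{: Idx}|%:R * (3 * (Rb.*2)%:R ^+ 2 / c)) <=
    (- lam / 2) * (#|{: boxT d (N - Rb)}|%:R * c * N%:R ^+ 2 / 3) ->
  exists (u1 u2 u3 u1' u2' u3' : mE G -> R -> R),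
    inH1 u1 u1' /\ inH1 u2 u2' /\ inH1 u3 u3' /\ linindep3 u1 u2 u3 /\
    forall a1 a2 a3 : R,
      let w := lincomb3 a1 a2 a3 u1 u2 u3 in
      let w' := lincomb3 a1 a2 a3 u1' u2' u3' in
      fine (L2sq w') + lam * fine (L2sq w) <=
        lam / 2 * (fine (L2sq w') + fine (L2sq w)).
Proof.
move=> hlam HN.
exists (ip (h 0)), (ip (h 1)), (ip (h 2)), (dp (h 0)), (dp (h 1)), (dp (h 2)).
split; [|split; [|split; [|split]]].
- by rewrite h_Ha0; apply: inH1_ip; [exact: L2_ip_fin|exact: L2_dp_fin].
- by rewrite h_Ha1; apply: inH1_ip; [exact: L2_ip_fin|exact: L2_dp_fin].
- by rewrite h_Ha2; apply: inH1_ip; [exact: L2_ip_fin|exact: L2_dp_fin].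
- move=> a1 a2 a3 hz; apply: indep => e x hx; rewrite -lincomb_ip; exact: hz.
move=> a1 a2 a3 /=; rewrite lincomb_ip lincomb_dp.
have hD := D_bound a1 a2 a3.
have hM0 := @M_bound 0 a1 a2 a3 isT.
have hM1 := @M_bound 1 a1 a2 a3 isT.
have hM2 := @M_bound 2 a1 a2 a3 isT.
move: hD hM0 hM1 hM2 => /=.
set fD := fine _; set fM := fine _.
set nI := #|{: Idx}|%:R; set nB := #|{: boxT d (N - Rb)}|%:R.
set B := (Rb.*2)%:R ^+ 2; set n := N%:R.
set S := a1 ^+ 2 + a2 ^+ 2 + a3 ^+ 2 => hD hM0 hM1 hM2.
have hS : 0 <= S by rewrite /S !addr_ge0 ?sqr_ge0.
set Kd := nI * (3 * B / c); set Km := nB * c * n ^+ 2 / 3.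
have eD : fD <= S * Kd.
  by apply: le_trans hD _; rewrite /Kd le_eqVlt; apply/orP; left; apply/eqP; field; rewrite gt_eqF.
have eM : S * Km <= fM.
  have : 3 * (S * Km) = nB * (c * (a1 * n) ^+ 2) + nB * (c * (a2 * n) ^+ 2)
     + nB * (c * (a3 * n) ^+ 2) by rewrite /Km /S; field.
  move=> e3; lra.
have p1 : 0 <= (1 - lam / 2) * (S * Kd - fD) by apply: mulr_ge0; [lra|rewrite subr_ge0].
have p2 : 0 <= S * ((- lam / 2) * Km - (1 - lam / 2) * Kd) by apply: mulr_ge0; [|rewrite subr_ge0].
have p3 : 0 <= (- lam / 2) * (fM - S * Km) by apply: mulr_ge0; [lra|rewrite subr_ge0].
lra.
Qed.

End Graph.

Lemma expn_mono (a b d : nat) : (a <= b)%N -> (a ^ d <= b ^ d)%N.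
Proof. by move=> hab; elim: d => [|d IH] //; rewrite !expnS leq_mul. Qed.

Lemma choose_N (R : realType) (lam c : R) (d m Rb : nat) : lam < 0 -> 0 < c ->
  exists N : nat, [/\ (0 < N)%N, (Rb <= N)%N &
  (1 - lam / 2) * ((3 * ((N.*2 + Rb).*2.+1 ^ d) * m)%:R * (3 * (Rb.*2)%:R ^+ 2 / c)) <=
    (- lam / 2) * (((N - Rb).*2.+1 ^ d)%:R * c * N%:R ^+ 2 / 3)].
Proof.
move=> hl hc.
set B : R := (Rb.*2)%:R ^+ 2.
set T : R := (3 ^ d * m)%:R.
set nu : R := 1 - lam / 2; set mu : R := - lam / 2.
have hnu : 0 < nu by rewrite /nu; lra.
have hmu : 0 < mu by rewrite /mu; lra.
have hB : 0 <= B by rewrite /B sqr_ge0.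
have hT : 0 <= T by [].
set Q : R := 27 * nu * T * B / (mu * c ^+ 2).
have hQ : 0 <= Q.
  rewrite /Q; apply: divr_ge0; last by apply: mulr_ge0; [exact: ltW|exact: sqr_ge0].
  by apply: mulr_ge0 => //; apply: mulr_ge0 => //; apply: mulr_ge0 => //; exact: ltW.
set N := maxn (maxn 1 (4 * Rb)) (Num.Def.archi_bound Q).
have hN1 : (1 <= N)%N := leq_trans (leq_maxl 1 (4 * Rb)) (leq_maxl _ _).
have hN4 : (4 * Rb <= N)%N := leq_trans (leq_maxr 1 (4 * Rb)) (leq_maxl _ _).
have hNQ : Q <= N%:R.
  apply: le_trans (ltW (archi_boundP hQ)) _; rewrite ler_nat; exact: leq_maxr.
clearbody N.
exists N; split => //; first lia.
set X : R := ((N - Rb).*2.+1 ^ d)%:R.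
have hX : 0 < X by rewrite /X ltr0n expn_gt0.
have hA : ((3 * ((N.*2 + Rb).*2.+1 ^ d) * m)%:R : R) <= 3 * T * X.
  have hAB : ((N.*2 + Rb).*2.+1 ^ d <= 3 ^ d * (N - Rb).*2.+1 ^ d)%N.
    by rewrite -expnMn; apply: expn_mono; lia.
  rewrite /T /X -!natrM ler_nat.
  apply: leq_trans (leq_mul (leq_mul (leqnn 3) hAB) (leqnn m)) _.
  move: (3 ^ d)%N ((N - Rb).*2.+1 ^ d)%N => p q; lia.
have hn : N%:R <= (N%:R : R) ^+ 2.
  by rewrite expr2 ler_peMl // ler1n.
have key : 27 * nu * T * B <= mu * c ^+ 2 * N%:R ^+ 2.
  have : 27 * nu * T * B <= mu * c ^+ 2 * Q.
    by rewrite /Q [X in _ <= X]mulrC divfK // mulf_neq0 ?gt_eqF // exprn_gt0.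
  move=> h1; apply: (le_trans h1); apply: ler_wpM2l.
    by apply: mulr_ge0; [exact: ltW|exact: sqr_ge0].
  exact: le_trans hNQ hn.
have h9 : 0 <= 3 * B / c by apply: divr_ge0; [apply: mulr_ge0|exact: ltW].
apply: (@le_trans _ _ (nu * (3 * T * X * (3 * B / c)))).
  by apply: ler_wpM2l; [exact: ltW|apply: ler_wpM2r].
rewrite -subr_ge0.
have -> : mu * (X * c * N%:R ^+ 2 / 3) - nu * (3 * T * X * (3 * B / c)) =
  X / (3 * c) * (mu * c ^+ 2 * N%:R ^+ 2 - 27 * nu * T * B).
  by rewrite /mu /nu; field; rewrite gt_eqF.
apply: mulr_ge0; last by rewrite subr_ge0.
by apply: divr_ge0; [exact: ltW|apply: mulr_ge0 => //; exact: ltW].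
Qed.

Theorem lemma6p2 (R : realType) (G : mgraph R) (hG : periodic_graph G)
  (lambda : R) (hl : lambda < 0) :
  exists (u1 u2 u3 u1' u2' u3' : mE G -> R -> R),
    inH1 u1 u1' /\ inH1 u2 u2' /\ inH1 u3 u3' /\ linindep3 u1 u2 u3 /\
    forall a1 a2 a3 : R,
      let w := lincomb3 a1 a2 a3 u1 u2 u3 in
      let w' := lincomb3 a1 a2 a3 u1' u2' u3' in
      fine (L2sq w') + lambda * fine (L2sq w) <=
        lambda / 2 * (fine (L2sq w') + fine (L2sq w)).
Proof.
case: hG => hA [infE [_ hD]].
case: hA => lenpos [_ [_ [c [c0 lenc]]]].
case: hD => d [aV [aE hD]].
case: hD => aV0 [aE0 [aVD [aED [_ [aEadj [aVfree [aEfree [hcE hcV]]]]]]]].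
case: hcE => sE cocE; case: hcV => sV cocV.
have [kr Hkr] : {kr : mV G -> 'rV[int]_d * mV G &
    forall v, (kr v).2 \in sV /\ v = aV (kr v).1 (kr v).2}.
  apply: (@choice _ _ (fun v p => p.2 \in sV /\ v = aV p.1 p.2)) => v.
  by have [k [v0 [h1 h2]]] := cocV v; exists (k, v0).
have [ke HkE] : {ke : mE G -> 'rV[int]_d * mE G &
    forall e, (ke e).2 \in sE /\ e = aE (ke e).1 (ke e).2}.
  apply: (@choice _ _ (fun e p => p.2 \in sE /\ e = aE p.1 p.2)) => e.
  by have [k [e0 [h1 h2]]] := cocE e; exists (k, e0).
pose kap := fun v => (kr v).1; pose rho := fun v => (kr v).2.
pose kapE := fun e => (ke e).1; pose eE := fun e => (ke e).2.
have Hkr' : forall v, rho v \in sV /\ v = aV (kap v) (rho v) by exact: Hkr.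
have HkE' : forall e, eE e \in sE /\ e = aE (kapE e) (eE e) by exact: HkE.
have [Rb HRb] := Rb_exists aV0 aVD aEadj aVfree sE Hkr'.
have [e0 _] : exists e : mE G, True.
  apply: contrapT => hne; apply: infE; exists [::] => e; exfalso; apply: hne; by exists e.
have dpos : (0 < d)%N.
  case: (posnP d) => [d0|//]; exfalso; apply: infE; exists sE => e.
  have [k [e1 [h1 ->]]] := cocE e.
  have -> : k = 0 by apply/rowP => i; exfalso; have := ltn_ord i; move: (nat_of_ord i) => n; rewrite d0.
  by rewrite aE0.
have e00E : eE e0 \in sE by have [] := HkE' e0.
have [N [N0 hRN HN]] := choose_N d (size sE) Rb hl c0.
apply: (@main_sec R G d aE aE0 aED aEfree sE kap kapE eE HkE' Rb HRb N
  (Ordinal dpos) (eE e0) hRN lenpos c c0 lenc N0 e00E lambda hl).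
by rewrite card_Idx card_boxT.
Qed.
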